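(* Let $L$ be a finite-dimensional pure, nonnilpotent, solvable Lie algebra over $\mathbb{C}$ of breadth $2$ such that $\dim[L,L]=2$ and $\dim L^k=1$ for all integers $k\geq 2$. Then $\dim Z(L)=1$.
   Context: For $x\in L$, $b(x)=\mathrm{rank}(\mathrm{ad}_x)$ and the breadth of $L$ is $b(L)=\max\{b(x)\mid x\in L\}$. $L$ is pure if it has no abelian ideal as a direct summand; equivalently $Z(L)\subseteq[L,L]$, where $Z(L)$ is the center. The lower central series is indexed by $L^0=L$, $L^1=[L,L]$ and $L^k=[L,L^{k-1}]$ for $k\geq 2$. *)

(* Defs.v *)
From HB Require Import structures.
From mathcomp Require Import all_boot all_order all_algebra.
From mathcomp Require Import complex.
From mathcomp Require Import Rstruct.
Set Implicit Arguments. Unset Strict Implicit. Unset Printing Implicit Defensive.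
Import Order.TTheory GRing.Theory Num.Theory.
Local Open Scope ring_scope.

Definition CC : fieldType := (Rdefinitions.R)[i].

Section Lie.
Variables (F : fieldType) (L : vectType F) (br : L -> L -> L).

Definition is_lie_bracket : Prop :=
  [/\ (forall (a : F) (x y z : L), br (a *: x + y) z = a *: br x z + br y z),
      (forall (a : F) (x y z : L), br x (a *: y + z) = a *: br x y + br x z),
      (forall x : L, br x x = 0) &
      (forall x y z : L, br x (br y z) + br y (br z x) + br z (br x y) = 0)].

Definition ad (x : L) : 'End(L) := linfun (br x).

Definition brd (x : L) : nat := \dim (limg (ad x)).

Definition has_breadth (b : nat) : Prop :=
  (exists x, brd x = b) /\ (forall x, (brd x <= b)%N).

Definition brs (A B : {vspace L}) : {vspace L} :=
  <<[seq br a b | a <- vbasis A, b <- vbasis B]>>%VS.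

(* lower central series: L^0 = L, L^k = [L, L^(k-1)] *)
Fixpoint lcs (k : nat) : {vspace L} :=
  match k with 0 => fullv | k'.+1 => brs fullv (lcs k') end.

Fixpoint dser (k : nat) : {vspace L} :=
  match k with 0 => fullv | k'.+1 => brs (dser k') (dser k') end.

Definition center : {vspace L} := lker (linfun ad).

Definition nilpotent : Prop := exists k, lcs k = 0%VS.
Definition solvable : Prop := exists k, dser k = 0%VS.
Definition pure : Prop := (center <= brs fullv fullv)%VS.

End Lie.

(* Main.v *)
Require Import Defs.
From HB Require Import structures.
From mathcomp Require Import all_boot all_order all_algebra.
Set Implicit Arguments. Unset Strict Implicit. Unset Printing Implicit Defensive.
Import Order.TTheory GRing.Theory Num.Theory.
Local Open Scope ring_scope.

Lemma linfunE' (K : fieldType) (aT rT : vectType K) (f : aT -> rT)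
  (Hf : forall a x y, f (a *: x + y) = a *: f x + f y) : linfun f =1 f.
Proof.
pose g : {linear aT -> rT} := HB.pack f (GRing.isLinear.Build K aT rT *:%R f Hf).
exact: (lfunE g).
Qed.

Section S.
Variables (F : fieldType) (L : vectType F) (br : L -> L -> L).
Hypothesis Hb : is_lie_bracket br.

Lemma brDl a x y z : br (a *: x + y) z = a *: br x z + br y z.
Proof. by case: Hb. Qed.
Lemma brDr a x y z : br x (a *: y + z) = a *: br x y + br x z.
Proof. by case: Hb. Qed.
Lemma brxx x : br x x = 0.
Proof. by case: Hb. Qed.
Lemma brJ x y z : br x (br y z) + br y (br z x) + br z (br x y) = 0.
Proof. by case: Hb. Qed.

Definition adl (x : L) : 'End(L) := linfun (br^~ x).
Lemma adlE x y : adl x y = br y x.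
Proof. by rewrite /adl linfunE' // => *; rewrite brDl. Qed.
Lemma adE x y : ad br x y = br x y.
Proof. by rewrite /ad linfunE' // => *; rewrite brDr. Qed.

Lemma br0l x : br 0 x = 0.
Proof. by rewrite -(adlE x) linear0. Qed.
Lemma br0r x : br x 0 = 0.
Proof. by rewrite -(adE x) linear0. Qed.
Lemma brZl a x y : br (a *: x) y = a *: br x y.
Proof. by rewrite -!adlE linearZ. Qed.
Lemma brZr a x y : br x (a *: y) = a *: br x y.
Proof. by rewrite -!adE linearZ. Qed.
Lemma brNl x y : br (- x) y = - br x y.
Proof. by rewrite -!adlE linearN. Qed.
Lemma brNr x y : br x (- y) = - br x y.
Proof. by rewrite -!adE linearN. Qed.
Lemma brBr x y z : br x (y - z) = br x y - br x z.
Proof. by rewrite -!adE linearB. Qed.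
Lemma brA x y : br x y = - br y x.
Proof.
have := brxx (x + y).
rewrite -(adlE (x+y)) linearD /= !adlE -!adE !linearD /= !adE !brxx add0r addr0.
by move/eqP; rewrite addr_eq0 => /eqP.
Qed.

Lemma brs_mem (A B : {vspace L}) a b : a \in A -> b \in B -> br a b \in brs br A B.
Proof.
move=> aA bB.
have H : br a b \in (adl b @: A)%VS by rewrite -adlE memv_img.
rewrite -{1}(span_basis (vbasisP A)) limg_span in H.
move: H; apply/subvP.
apply/span_subvP => _ /mapP [v vA ->]; rewrite adlE.
have H1 : br v b \in (ad br v @: B)%VS by rewrite -adE memv_img.
rewrite -{1}(span_basis (vbasisP B)) limg_span in H1.
move: H1; apply/subvP.
apply/span_subvP => _ /mapP [u uB ->]; rewrite adE.
by apply: memv_span; apply: allpairs_f.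
Qed.

Lemma brs_sub (A B W : {vspace L}) : (forall a b, a \in A -> b \in B -> br a b \in W) ->
  (brs br A B <= W)%VS.
Proof.
move=> H; apply/span_subvP => _ /allpairsP [[a b] [/= aA bB ->]].
by apply: H; apply: vbasis_mem.
Qed.


Lemma ad_lin : forall a x y, ad br (a *: x + y) = a *: ad br x + ad br y.
Proof. by move=> a x y; apply/lfunP => u; rewrite add_lfunE scale_lfunE !adE brDl. Qed.

Lemma mem_center u : (u \in center br) = (ad br u == 0).
Proof. by rewrite /center memv_ker (linfunE' ad_lin). Qed.

Lemma centerP u : reflect (forall v, br u v = 0) (u \in center br).
Proof.
rewrite mem_center; apply: (iffP eqP) => [H v|H].
  by rewrite -adE H zero_lfunE.
by apply/lfunP => v; rewrite adE H zero_lfunE.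
Qed.

Lemma main_sec :
  pure br ->
  \dim (brs br fullv fullv) = 2%N ->
  \dim (lcs br 2) = 1%N -> \dim (lcs br 3) = 1%N ->
  \dim (center br) = 1%N.
Proof.
rewrite /pure /=.
set L1 := brs br fullv fullv.
set I := brs br fullv L1.
set J := brs br fullv I.
move=> pureL dL1 dI dJ.
have IL1 : (I <= L1)%VS by apply: brs_sub => a b _ _; apply: brs_mem; apply: memvf.
have JI : (J <= I)%VS.
  apply: brs_sub => a b _ bI; apply: brs_mem => //; first exact: memvf.
  by move/subvP: IL1; apply.
set z := vpick I.
have zI : z \in I by apply: memv_pick.
have z0 : z != 0 by rewrite vpick0 -dimv_eq0 dI.
have Iz : I = <[z]>%VS.
  apply/eqP; rewrite eq_sym eqEdim -memvE zI dim_vline z0 dI //.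
have phi : forall u, exists k, br u z = k *: z.
  move=> u; apply/vlineP; rewrite -Iz; move/subvP: JI; apply.
  by apply: brs_mem => //; apply: memvf.
set D := (L1 :\: I)%VS.
have dD : \dim D = 1%N.
  have := dimv_cap_compl L1 I; rewrite (capv_idPr IL1) dI dL1.
  by move=> [].
set w := vpick D.
have wD : w \in D by apply: memv_pick.
have w0 : w != 0 by rewrite vpick0 -dimv_eq0 dD.
have Dw : D = <[w]>%VS.
  apply/eqP; rewrite eq_sym eqEdim -memvE wD dim_vline w0 dD //.
have L1e : L1 = (<[w]> + <[z]>)%VS.
  by rewrite -Dw -Iz -{1}(addv_diff_cap L1 I) (capv_idPr IL1).
have wL1 : w \in L1 by move/subvP: (diffvSl L1 I); apply.
have brz : forall u, u \in L1 -> br z u = 0.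
  move=> u uL1; apply/eqP; rewrite -adE -memv_ker.
  move: u uL1; apply/subvP; apply: brs_sub => a b _ _.
  rewrite memv_ker adE.
  have := brJ a b z.
  have [k Hk] := phi b; have [m Hm] := phi a.
  rewrite Hk brZr Hm (brA z a) Hm brNr brZr Hk !scalerA mulrC addrN add0r.
  by move=> ->.
have brw : forall u, u \in L1 -> br w u = 0.
  move=> u uL1; apply/eqP; rewrite -adE -memv_ker.
  move: u uL1; apply/subvP; rewrite L1e subv_add -!memvE !memv_ker !adE brxx eqxx /=.
  by rewrite brA brz // oppr0.
have ab : forall u v, u \in L1 -> v \in L1 -> br u v = 0.
  move=> u v uL1 vL1; apply/eqP; rewrite -adlE -memv_ker.
  move: u uL1; apply/subvP; rewrite L1e subv_add -!memvE !memv_ker !adlE.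
  by rewrite brz ?brw ?eqxx.
have [x xz] : exists x, br x z != 0.
  case: (eqVneq (adl z) 0) => [H|/lfunPn [x xz]]; last first.
    by exists x; rewrite -adlE -(zero_lfunE _ x).
  have : (J <= 0)%VS.
    apply: brs_sub => a b _; rewrite Iz => /vlineP [k ->].
    by rewrite brZr -adlE H zero_lfunE scaler0 memv0.
  by rewrite subv0 -dimv_eq0 dJ.
have [c Hc] := phi x.
have c0 : c != 0 by apply: contraNneq xz => c0; rewrite Hc c0 scale0r.
have [d Hd] : exists d, br x w = d *: z.
  by apply/vlineP; rewrite -Iz; apply: brs_mem => //; apply: memvf.
set e := c *: w - d *: z.
have eZ : e \in center br.
  apply/centerP => b; rewrite brA; apply/eqP; rewrite oppr_eq0; apply/eqP.
  have [f Hf] := phi b.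
  have [g Hg] : exists g, br b w = g *: z.
    by apply/vlineP; rewrite -Iz; apply: brs_mem => //; apply: memvf.
  have := brJ x b w.
  rewrite Hg brZr Hc (brA w x) Hd brNr brZr Hf ab //; last first.
    by apply: brs_mem; apply: memvf.
  rewrite addr0 /e brBr !brZr Hg Hf !scalerA => <-.
  by rewrite mulrC.
have e0 : e != 0.
  apply/eqP => /eqP; rewrite subr_eq0 => /eqP Hcw.
  have : w \in (D :&: I)%VS.
    rewrite memv_cap wD /= Iz.
    have -> : w = (c^-1 * d) *: z by rewrite -scalerA -Hcw scalerA mulVf // scale1r.
    by rewrite memvZ ?memv_line.
  by rewrite capv_diff memv0 (negPf w0).
have Z0 : center br != 0%VS by apply/eqP => Z0; move: eZ; rewrite Z0 memv0 (negPf e0).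
have ZL1 : center br != L1.
  apply/eqP => ZL1.
  have : (I <= 0)%VS.
    apply: brs_sub => a b _; rewrite -ZL1 => /centerP H.
    by rewrite brA H oppr0 memv0.
  by rewrite subv0 -dimv_eq0 dI.
have := ltn_leqif (dimv_leqif_eq pureL); rewrite ZL1 dL1 /=.
move: Z0; rewrite -dimv_eq0.
by case: (\dim (center br)) => [|[|]].
Qed.

End S.

Theorem lemma3p3 (L : vectType CC) (br : L -> L -> L) :
  is_lie_bracket br ->
  pure br -> ~ nilpotent br -> solvable br ->
  has_breadth br 2 ->
  \dim (brs br fullv fullv) = 2%N ->
  (forall k : nat, (2 <= k)%N -> \dim (lcs br k) = 1%N) ->
  \dim (center br) = 1%N.
Proof.
move=> Hb Hp _ _ _ HL1 Hk.
by apply: main_sec => //; apply: Hk.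
Qed.
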